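(* Let $k\ge1$ and $d\ge 1$ be integers and $c$ a real number with $0< c\le k$. Let $S$ be a binomial random variable with parameters $k$ and $c/k$. If $d\le c\left(1-\frac{1}{k+1}\right)+1$, then \[ \mathbb{P}(S\ge d)\ \ge\ h_d(c) = 1-e^{-c}\sum_{i=0}^{d-1}\frac{c^i}{i!}. \]
   Context: $\mathbb{P}(S\ge d)$ is the probability that a buyer whose values for $k$ items are i.i.d. on $\{0,1\}$ with $\mathbb{P}(1)=c/k$ buys the bundle of all items at posted price $d$. *)

(* Defs.v *)
From Stdlib Require Import Reals Lra Lia List.
Open Scope R_scope.

Definition binom_pmf (k : nat) (p : R) (j : nat) : R :=
  C k j * p ^ j * (1 - p) ^ (k - j).

(* P(S >= d) for S ~ Binomial(k, p): sum of the pmf over j = d, ..., k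
   (empty sum, i.e. 0, if d > k). *)
Definition binom_tail (k : nat) (p : R) (d : nat) : R :=
  fold_right Rplus 0 (map (binom_pmf k p) (List.seq d (S k - d))).

(* h_d(c) = 1 - e^{-c} * sum_{i=0}^{d-1} c^i / i!  (= P(Poisson(c) >= d)). *)
Definition h (d : nat) (c : R) : R :=
  1 - exp (- c) * fold_right Rplus 0 (map (fun i => c ^ i / INR (Factorial.fact i)) (List.seq 0 d)).

(* Main.v *)
Require Import Defs.
From Stdlib Require Import Reals Lra Lia List.
From Coquelicot Require Import Coquelicot.
Open Scope R_scope.

Fixpoint rsum (f : nat -> R) (a n : nat) : R :=
  match n with O => 0 | S n' => f a + rsum f (S a) n' end.

Lemma fold_rsum f a n : fold_right Rplus 0 (map f (seq a n)) = rsum f a n.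
Proof. revert a; induction n; intros a; simpl; auto. rewrite IHn; auto. Qed.

Lemma rsum_split f a n1 n2 : rsum f a (n1 + n2) = rsum f a n1 + rsum f (a + n1) n2.
Proof.
  revert a; induction n1; intros a; simpl.
  - rewrite Nat.add_0_r; ring.
  - rewrite IHn1. replace (S a + n1)%nat with (a + S n1)%nat by lia. ring.
Qed.

Lemma rsum_ext f g a n : (forall i, (a <= i < a + n)%nat -> f i = g i) -> rsum f a n = rsum g a n.
Proof.
  revert a; induction n; intros a H; simpl; auto.
  rewrite H by lia. rewrite IHn; auto. intros; apply H; lia.
Qed.

Lemma rsum_nonneg f a n : (forall i, 0 <= f i) -> 0 <= rsum f a n.
Proof. revert a; induction n; intros a H; simpl; try lra. specialize (IHn (S a) H). specialize (H a). lra. Qed.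

Lemma rsum_scal c f a n : rsum (fun i => c * f i) a n = c * rsum f a n.
Proof. revert a; induction n; intros a; simpl; try ring. rewrite IHn; ring. Qed.

Lemma rsum_le f g a n : (forall i, (a <= i < a + n)%nat -> f i <= g i) -> rsum f a n <= rsum g a n.
Proof.
  revert a; induction n; intros a H; simpl; try lra.
  assert (f a <= g a) by (apply H; lia).
  assert (rsum f (S a) n <= rsum g (S a) n) by (apply IHn; intros; apply H; lia). lra.
Qed.

Lemma sum_f_R0_rsum f n : sum_f_R0 f n = rsum f 0 (S n).
Proof.
  induction n; [simpl; ring|].
  change (sum_f_R0 f n + f (S n) = rsum f 0 (S (S n))).
  rewrite IHn. replace (S (S n)) with (S n + 1)%nat by lia.
  rewrite (rsum_split f 0 (S n) 1). simpl. ring.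
Qed.

Definition T (m : nat) (s : R) (a : nat) : R := rsum (binom_pmf m s) a (S m - a).

Lemma tail_T m s a : binom_tail m s a = T m s a.
Proof. unfold binom_tail, T. apply fold_rsum. Qed.

Lemma T_step m s a : (a <= m)%nat -> T m s a = binom_pmf m s a + T m s (S a).
Proof.
  intros H. unfold T. replace (S m - a)%nat with (S (m - a)) by lia.
  simpl. replace (m - a)%nat with (S m - S a)%nat by lia. reflexivity.
Qed.

Lemma T_out m s a : (m < a)%nat -> T m s a = 0.
Proof. intros H. unfold T. replace (S m - a)%nat with 0%nat by lia. reflexivity. Qed.

Lemma Cnn n : Binomial.C n n = 1.
Proof. unfold Binomial.C. rewrite Nat.sub_diag. simpl. field; repeat split; try apply INR_fact_neq_0; try lra. Qed.

Lemma C_pos n k : (k <= n)%nat -> 0 < Binomial.C n k.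
Proof.
  intros. unfold Binomial.C. apply Rdiv_lt_0_compat.
  apply lt_0_INR, Factorial.lt_O_fact. apply Rmult_lt_0_compat; apply lt_0_INR, Factorial.lt_O_fact.
Qed.

Lemma C_S_S n k : (k <= n)%nat -> Binomial.C (S n) (S k) * INR (S k) = INR (S n) * Binomial.C n k.
Proof.
  intros H. unfold Binomial.C. replace (S n - S k)%nat with (n - k)%nat by lia.
  rewrite !fact_simpl, !mult_INR. field.
  split; [apply INR_fact_neq_0|]. split; [apply INR_fact_neq_0|]. apply not_0_INR; lia.
Qed.

Lemma C_S_sub n k : (k < n)%nat -> Binomial.C (S n) (S k) * INR (n - k) = INR (S n) * Binomial.C n (S k).
Proof.
  intros H. unfold Binomial.C. replace (S n - S k)%nat with (S (n - S k))%nat by lia.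
  replace (n - k)%nat with (S (n - S k)) by lia.
  rewrite !fact_simpl, !mult_INR. field.
  split; [apply INR_fact_neq_0|]. split; [apply INR_fact_neq_0|]. split; apply not_0_INR; lia.
Qed.

Lemma T_pascal m q : forall k a, (S m - a = k)%nat -> (1 <= a <= S m)%nat ->
  T (S m) q a = T m q a + q * binom_pmf m q (a - 1).
Proof.
  induction k; intros a Hk Ha.
  - assert (a = S m) by lia. subst a.
    rewrite T_step by lia. rewrite (T_out (S m)) by lia. rewrite (T_out m) by lia.
    unfold binom_pmf. rewrite !Nat.sub_diag. replace (S m - 1)%nat with m by lia.
    rewrite !Nat.sub_diag, !Cnn. simpl. ring.
  - rewrite T_step by lia. rewrite (IHk (S a)) by lia.
    rewrite (T_step m q a) by lia.
    destruct a as [|a']; [lia|].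
    replace (S a' - 1)%nat with a' by lia. replace (S (S a') - 1)%nat with (S a') by lia.
    unfold binom_pmf.
    rewrite <- (pascal m a') by lia.
    replace (S m - S a')%nat with (S (m - S a')) by lia.
    replace (m - a')%nat with (S (m - S a')) by lia.
    simpl. ring.
Qed.

Lemma deriv_lb (f df : R -> R) a b K : a <= b ->
  (forall x, a <= x <= b -> is_derive f x (df x)) ->
  (forall x, a <= x <= b -> K <= df x) -> K * (b - a) <= f b - f a.
Proof.
  intros Hab Hd HK.
  destruct (MVT_gen f a b df) as [c [Hc Heq]].
  - intros x Hx. rewrite Rmin_left in Hx by lra. rewrite Rmax_right in Hx by lra.
    apply Hd; lra.
  - intros x Hx. rewrite Rmin_left in Hx by lra. rewrite Rmax_right in Hx by lra.
    apply continuity_pt_filterlim. apply (ex_derive_continuous f x).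
    exists (df x). apply Hd; lra.
  - rewrite Rmin_left in Hc by lra. rewrite Rmax_right in Hc by lra.
    rewrite Heq. apply Rmult_le_compat_r; [lra|]. apply HK; lra.
Qed.

Lemma deriv_mono (f df : R -> R) a b : a <= b ->
  (forall x, a <= x <= b -> is_derive f x (df x)) ->
  (forall x, a <= x <= b -> 0 <= df x) -> f a <= f b.
Proof. intros. pose proof (deriv_lb f df a b 0 H H0 H1). lra. Qed.

Lemma deriv_anti (f df : R -> R) a b : a <= b ->
  (forall x, a <= x <= b -> is_derive f x (df x)) ->
  (forall x, a <= x <= b -> df x <= 0) -> f b <= f a.
Proof.
  intros Hab Hd Hs.
  pose proof (deriv_mono (fun x => - f x) (fun x => - df x) a b Hab).
  assert (- f a <= - f b); [|lra]. apply H.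
  - intros. apply (is_derive_opp f x (df x)). apply Hd; auto.
  - intros. specialize (Hs x H0). lra.
Qed.

Lemma is_derive_xy (j r : nat) x :
  is_derive (fun s => s ^ j * (1 - s) ^ r) x
    (INR j * x ^ (pred j) * (1 - x) ^ r - INR r * x ^ j * (1 - x) ^ (pred r)).
Proof. auto_derive; auto. unfold Rminus; ring. Qed.

Definition g (m i : nat) (s : R) := Binomial.C m i * s ^ i * (1 - s) ^ (m - i).

Lemma pmf_deriv m i x : (i < m)%nat ->
  is_derive (fun s => binom_pmf (S m) s (S i)) x (INR (S m) * (g m i x - g m (S i) x)).
Proof.
  intros H. unfold binom_pmf, g.
  replace (S m - S i)%nat with (S (m - S i)) by lia.
  replace (m - i)%nat with (S (m - S i)) by lia.
  set (e := (m - S i)%nat).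
  assert (H1 := C_S_S m i ltac:(lia)).
  assert (H2 := C_S_sub m i H).
  replace (m - i)%nat with (S e) in H2 by (unfold e; lia).
  auto_derive; auto. cbn [Nat.pred].
  transitivity (Binomial.C (S m) (S i) * INR (S i) * x ^ i * (1 - x) ^ S e
     - Binomial.C (S m) (S i) * INR (S e) * x ^ S i * (1 - x) ^ e).
  - change (match i with 0%nat => 1 | S _ => INR i + 1 end) with (INR (S i)). change (match e with 0%nat => 1 | S _ => INR e + 1 end) with (INR (S e)). cbn [pow]. unfold Rminus; ring.
  - rewrite H1, H2. cbn [pow]. ring.
Qed.

Lemma pmf_deriv_last m x :
  is_derive (fun s => binom_pmf (S m) s (S m)) x (INR (S m) * g m m x).
Proof.
  unfold binom_pmf, g. rewrite !Nat.sub_diag, !Cnn.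
  auto_derive; auto. simpl. ring.
Qed.

Lemma T_deriv m : forall k a x, (m - a = k)%nat -> (a <= m)%nat ->
  is_derive (fun s => T (S m) s (S a)) x (INR (S m) * g m a x).
Proof.
  induction k; intros a x Hk Ha.
  - assert (a = m) by lia. subst a.
    apply is_derive_ext with (fun s => binom_pmf (S m) s (S m)).
    + intros t. rewrite (T_step (S m) t (S m)) by lia. rewrite (T_out (S m) t (S (S m))) by lia. symmetry. apply Rplus_0_r.
    + apply pmf_deriv_last.
  - apply is_derive_ext with (fun s => binom_pmf (S m) s (S a) + T (S m) s (S (S a))).
    + intros t. rewrite (T_step (S m) t (S a)) by lia. reflexivity.
    + replace (INR (S m) * g m a x) with
        (INR (S m) * (g m a x - g m (S a) x) + INR (S m) * g m (S a) x) by ring.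
      apply (is_derive_plus (fun s => binom_pmf (S m) s (S a)) (fun s => T (S m) s (S (S a)))).
      * apply pmf_deriv. lia.
      * apply IHk; lia.
Qed.

Lemma unimodal (j r : nat) q s p : 0 < q -> q <= s -> s <= p -> p <= 1 ->
  q ^ j * (1 - q) ^ r <= s ^ j * (1 - s) ^ r \/ p ^ j * (1 - p) ^ r <= s ^ j * (1 - s) ^ r.
Proof.
  intros Hq Hqs Hsp Hp.
  set (df := fun x => INR j * x ^ (pred j) * (1 - x) ^ r - INR r * x ^ j * (1 - x) ^ (pred r)).
  assert (Hd : forall x, is_derive (fun s => s ^ j * (1 - s) ^ r) x (df x)) by (intros; apply is_derive_xy).
  destruct j as [|j'].
  - right. apply (deriv_anti (fun s => s ^ 0 * (1 - s) ^ r) df s p); auto.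
    intros x Hx. unfold df. simpl.
    assert (0 <= (1 - x) ^ pred r) by (apply pow_le; lra).
    assert (0 <= INR r) by apply pos_INR. nra.
  - destruct r as [|r'].
    + left. apply (deriv_mono (fun s => s ^ S j' * (1 - s) ^ 0) df q s); auto.
      intros x Hx. unfold df. cbn [Nat.pred pow]. change (INR 0) with 0.
      assert (0 <= x ^ j') by (apply pow_le; lra).
      assert (0 <= INR (S j')) by apply pos_INR. nra.
    + assert (Hdf : forall x, df x = x ^ j' * (1 - x) ^ r' * (INR (S j') * (1 - x) - INR (S r') * x)).
      { intros. unfold df. cbn [Nat.pred pow]. ring. }
      destruct (Rle_lt_dec 0 (INR (S j') * (1 - s) - INR (S r') * s)) as [Hs|Hs].
      * left. apply (deriv_mono (fun s => s ^ S j' * (1 - s) ^ S r') df q s); auto.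
        intros x Hx. rewrite Hdf.
        assert (0 <= x ^ j') by (apply pow_le; lra).
        assert (0 <= (1 - x) ^ r') by (apply pow_le; lra).
        assert (0 <= INR (S j')) by apply pos_INR.
        assert (0 <= INR (S r')) by apply pos_INR.
        apply Rmult_le_pos; [apply Rmult_le_pos; auto|]. nra.
      * right. apply (deriv_anti (fun s => s ^ S j' * (1 - s) ^ S r') df s p); auto.
        intros x Hx. rewrite Hdf.
        assert (0 <= x ^ j') by (apply pow_le; lra).
        assert (0 <= (1 - x) ^ r') by (apply pow_le; lra).
        assert (0 <= INR (S j')) by apply pos_INR.
        assert (0 <= INR (S r')) by apply pos_INR.
        assert (INR (S j') * (1 - x) - INR (S r') * x <= 0) by nra.
        assert (0 <= x ^ j' * (1 - x) ^ r') by (apply Rmult_le_pos; auto).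
        nra.
Qed.

Lemma HB (A Cc : R) (k : nat) : 0 <= Cc <= A -> A ^ k * (A - INR k * Cc) <= (A - Cc) ^ k * A.
Proof.
  intros H. induction k.
  - simpl. lra.
  - rewrite S_INR. simpl.
    assert (HAk : (A - Cc) ^ k <= A ^ k) by (apply pow_incr; lra).
    assert (0 <= A) by lra.
    assert (0 <= (A - Cc) ^ k) by (apply pow_le; lra).
    assert (A * (A ^ k * (A - INR k * Cc)) <= A * ((A - Cc) ^ k * A)) by (apply Rmult_le_compat_l; auto).
    assert (A * Cc * (A - Cc) ^ k <= A * Cc * A ^ k) by (apply Rmult_le_compat_l; nra).
    nra.
Qed.

Lemma Bern2 (A B : R) (w : nat) : 0 < B <= A -> A ^ w * (B - INR w * (A - B)) <= B ^ (S w).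
Proof.
  intros H. induction w.
  - simpl. lra.
  - rewrite S_INR. 
    assert (0 <= A ^ w) by (apply pow_le; lra).
    assert (A ^ S w * (B - (INR w + 1) * (A - B)) <= B * (A ^ w * (B - INR w * (A - B)))).
    { simpl. assert (0 <= A ^ w * ((INR w + 1) * (A - B) * (A - B))) by
        (apply Rmult_le_pos; auto; assert (0 <= INR w) by apply pos_INR; apply Rmult_le_pos; nra).
      nra. }
    assert (B * (A ^ w * (B - INR w * (A - B))) <= B * B ^ S w) by (apply Rmult_le_compat_l; lra).
    change (B ^ S (S w)) with (B * B ^ S w). lra.
Qed.

Lemma P2 (w : nat) (u : R) : INR w <= u <= INR w + 1 ->
  (u + 1) ^ (S w) * (INR w + 1) ^ w <= (INR w + 1 + 1) ^ (S w) * u ^ w.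
Proof.
  intros Hu.
  destruct w as [|w'].
  - change (INR 0) with 0 in *. simpl pow. lra.
  - assert (Hw : 1 <= INR (S w')) by (rewrite S_INR; pose proof (pos_INR w'); lra).
    remember (S w') as w eqn:Ew. clear Ew.
    remember (INR w + 1) as v eqn:Ev.
    assert (Hu0 : 0 < u) by lra.
    pose proof (Bern2 (v * (u + 1)) (u * (v + 1)) w) as HB2.
    assert (Hv : v - u >= 0) by lra.
    assert (0 < u * (v + 1) <= v * (u + 1)) by (split; [apply Rmult_lt_0_compat; lra| nra]).
    specialize (HB2 H).
    rewrite !Rpow_mult_distr in HB2.
    assert (Hk : u * (u + 1) <= u * (v + 1) - INR w * (v * (u + 1) - u * (v + 1))).
    { replace (v * (u + 1) - u * (v + 1)) with (v - u) by ring. nra. }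
    assert (0 <= v ^ w * (u + 1) ^ w) by (apply Rmult_le_pos; apply pow_le; lra).
    assert (v ^ w * (u + 1) ^ w * (u * (u + 1)) <= u ^ S w * (v + 1) ^ S w) by
      (eapply Rle_trans; [apply Rmult_le_compat_l; [auto| exact Hk]| exact HB2]).
    simpl in H1 |- *.
    assert (0 < u ^ w) by (apply pow_lt; lra).
    apply (Rmult_le_reg_l u); auto. nra.
Qed.

Lemma Qstep (v : nat) : (1 <= v)%nat ->
  (INR v + 1) ^ (2 * v + 1) <= INR v ^ v * (INR v + 2) ^ (v + 1).
Proof.
  intros Hv. set (x := INR v).
  assert (Hx : 1 <= x) by (unfold x; apply (le_INR 1); lia).
  pose proof (HB ((x + 1) ^ 2) 1 (S v)) as H.
  rewrite S_INR in H. fold x in H.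
  assert (0 <= 1 <= (x + 1) ^ 2) by (split; nra). specialize (H H0).
  replace ((x + 1) ^ 2 - (x + 1) * 1) with ((x + 1) * x) in H by ring.
  replace ((x + 1) ^ 2 - 1) with (x * (x + 2)) in H by ring.
  rewrite <- pow_mult in H. rewrite Rpow_mult_distr in H.
  replace (2 * S v)%nat with (S (2 * v + 1)) in H by lia.
  rewrite <- !tech_pow_Rmult in H. rewrite pow_O in H.
  replace (v + 1)%nat with (S v) by lia. rewrite <- tech_pow_Rmult.
  assert (0 < (x + 1) * (x + 1) * x) by (apply Rmult_lt_0_compat; nra).
  apply (Rmult_le_reg_r ((x + 1) * (x + 1) * x)); auto.
  eapply Rle_trans; [|eapply Rle_trans; [exact H|]]; right; ring.
Qed.

Lemma P3 (v m : nat) : (1 <= v <= m)%nat ->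
  (INR v + 1) ^ v * INR m ^ m <= (INR m + 1) ^ m * INR v ^ v.
Proof.
  intros [H1 H2]. induction H2.
  - lra.
  - pose proof (Qstep m ltac:(lia)) as Q.
    rewrite S_INR.
    assert (Hm : 1 <= INR m) by (apply (le_INR 1); lia). assert (HV0 : 0 <= INR v) by apply pos_INR.
    set (M := INR m) in *. set (V := INR v) in *.
    assert (0 < M ^ m) by (apply pow_lt; lra).
    assert (0 <= V ^ v) by (apply pow_le; lra).
    assert (0 < (M + 1) ^ (m + 1)) by (apply pow_lt; lra).
    assert (0 <= (V + 1) ^ v) by (apply pow_le; lra).
    apply (Rmult_le_reg_l (M ^ m)); auto.
    replace (M + 1 + 1) with (M + 2) by ring.
    replace (S m) with (m + 1)%nat by lia.
    assert (E1 : (M + 1) ^ (2 * m + 1) = (M + 1) ^ m * (M + 1) ^ (m + 1)) by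
      (rewrite <- pow_add; f_equal; lia).
    rewrite E1 in Q.
    assert ((V + 1) ^ v * M ^ m * (M + 1) ^ (m + 1) <= (M + 1) ^ m * V ^ v * (M + 1) ^ (m + 1))
      by (apply Rmult_le_compat_r; lra).
    assert (V ^ v * ((M + 1) ^ m * (M + 1) ^ (m + 1)) <= V ^ v * (M ^ m * (M + 2) ^ (m + 1)))
      by (apply Rmult_le_compat_l; lra).
    nra.
Qed.

Lemma P1 (m v : nat) (u : R) : (1 <= v <= m)%nat -> INR v - 1 <= u <= INR v ->
  INR m ^ m * (u + 1) ^ v <= (INR m + 1) ^ m * u ^ (v - 1) * INR v.
Proof.
  intros Hv Hu.
  destruct v as [|w]; [lia|].
  replace (S w - 1)%nat with w by lia.
  pose proof (P2 w u) as H2. rewrite S_INR in Hu. specialize (H2 ltac:(lra)).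
  pose proof (P3 (S w) m Hv) as H3. rewrite S_INR in H3 |- *.
  set (V := INR w + 1) in *.
  assert (Hm : 1 <= INR m) by (apply (le_INR 1); lia).
  assert (HV : 1 <= V) by (unfold V; pose proof (pos_INR w); lra).
  assert (0 < V ^ w) by (apply pow_lt; lra).
  assert (0 <= u ^ w) by (apply pow_le; lra).
  assert (0 <= INR m ^ m) by (apply pow_le; lra).
  apply (Rmult_le_reg_r (V ^ w)); auto.
  assert (INR m ^ m * ((u + 1) ^ S w * V ^ w) <= INR m ^ m * ((V + 1) ^ S w * u ^ w))
    by (apply Rmult_le_compat_l; auto).
  assert ((V + 1) ^ S w * INR m ^ m * u ^ w <= (INR m + 1) ^ m * V ^ S w * u ^ w)
    by (apply Rmult_le_compat_r; auto).
  simpl pow in *. nra.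
Qed.

Lemma div_le_div a b c d : 0 < b -> 0 < d -> a * d <= c * b -> a / b <= c / d.
Proof.
  intros Hb Hd H.
  replace (a / b) with ((a * d) * / (b * d)) by (field; lra).
  replace (c / d) with ((c * b) * / (b * d)) by (field; lra).
  apply Rmult_le_compat_r; auto. left. apply Rinv_0_lt_compat. nra.
Qed.

Lemma pow_div a b n : b <> 0 -> (a / b) ^ n = a ^ n / b ^ n.
Proof. intros. unfold Rdiv. rewrite Rpow_mult_distr, pow_inv. reflexivity. Qed.

Lemma pmf_cmp (j e : nat) (lam : R) : 0 < lam ->
  INR (S e) - 1 <= INR (S (j + e)) - lam <= INR (S e) ->
  Binomial.C (S (j + e)) j * (lam / (INR (S (j + e)) + 1)) ^ j * (1 - lam / (INR (S (j + e)) + 1)) ^ (S e)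
  <= Binomial.C (j + e) j * (lam / INR (S (j + e))) ^ j * (1 - lam / INR (S (j + e))) ^ e.
Proof.
  intros Hl Hu.
  pose proof (P1 (S (j + e)) (S e) (INR (S (j + e)) - lam) ltac:(lia) Hu) as HP.
  replace (S e - 1)%nat with e in HP by lia.
  rewrite (pascal_step2 (j + e) j) by lia.
  replace (S (j + e) - j)%nat with (S e) by lia.
  set (M := INR (S (j + e))) in *.
  set (u := M - lam) in *.
  assert (HM : 1 <= M) by (unfold M; apply (le_INR 1); lia).
  assert (HE : 1 <= INR (S e)) by (apply (le_INR 1); lia).
  assert (Hu0 : 0 <= u) by (pose proof (pos_INR e); rewrite S_INR in Hu; lra).
  replace (1 - lam / (M + 1)) with ((u + 1) / (M + 1)) by (unfold u; field; lra).
  replace (1 - lam / M) with (u / M) by (unfold u; field; lra).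
  rewrite !pow_div by lra.
  assert (HC : 0 <= Binomial.C (j + e) j) by (left; apply C_pos; lia).
  assert (Hlj : 0 <= lam ^ j) by (apply pow_le; lra).
  assert (E1 : (M + 1) ^ j * (M + 1) ^ S e = (M + 1) ^ (S (j + e))) by
    (rewrite <- pow_add; f_equal; lia).
  assert (E2 : M ^ j * M ^ e = M ^ (j + e)) by (rewrite <- pow_add; reflexivity).
  assert (P1' : 0 < (M + 1) ^ j) by (apply pow_lt; lra).
  assert (P2' : 0 < (M + 1) ^ S e) by (apply pow_lt; lra).
  assert (P3' : 0 < M ^ j) by (apply pow_lt; lra).
  assert (P4' : 0 < M ^ e) by (apply pow_lt; lra).
  replace (M / INR (S e) * Binomial.C (j + e) j * (lam ^ j / (M + 1) ^ j) * ((u + 1) ^ S e / (M + 1) ^ S e))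
    with ((Binomial.C (j + e) j * lam ^ j) * ((M * (u + 1) ^ S e) / (INR (S e) * (M + 1) ^ (S (j + e)))))
    by (rewrite <- E1; field; lra).
  replace (Binomial.C (j + e) j * (lam ^ j / M ^ j) * (u ^ e / M ^ e))
    with ((Binomial.C (j + e) j * lam ^ j) * (u ^ e / M ^ (j + e)))
    by (rewrite <- E2; field; lra).
  apply Rmult_le_compat_l; [apply Rmult_le_pos; auto|].
  apply div_le_div.
  - apply Rmult_lt_0_compat; [lra| apply pow_lt; lra].
  - apply pow_lt; lra.
  - replace (M ^ S (j + e)) with (M * M ^ (j + e)) in HP by reflexivity.
    nra.
Qed.

Lemma psi_q (j e : nat) (q : R) : 0 <= q <= 1 ->
  INR (S (j + e)) * (1 - q) <= INR (S e) ->
  binom_pmf (S (j + e)) q j <= Binomial.C (j + e) j * q ^ j * (1 - q) ^ e.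
Proof.
  intros Hq H. unfold binom_pmf.
  rewrite (pascal_step2 (j + e) j) by lia.
  replace (S (j + e) - j)%nat with (S e) by lia.
  assert (HE : 1 <= INR (S e)) by (apply (le_INR 1); lia).
  assert (HC : 0 <= Binomial.C (j + e) j) by (left; apply C_pos; lia).
  assert (0 <= q ^ j) by (apply pow_le; lra).
  assert (0 <= (1 - q) ^ e) by (apply pow_le; lra).
  set (Z := Binomial.C (j + e) j * q ^ j * (1 - q) ^ e).
  assert (0 <= Z) by (unfold Z; apply Rmult_le_pos; [apply Rmult_le_pos|]; auto).
  replace (INR (S (j + e)) / INR (S e) * Binomial.C (j + e) j * q ^ j * (1 - q) ^ S e)
    with (Z * (INR (S (j + e)) * (1 - q) / INR (S e))) by (unfold Z; cbn [pow]; field; lra).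
  rewrite <- (Rmult_1_r Z) at 2. apply Rmult_le_compat_l; auto.
  apply (Rmult_le_reg_r (INR (S e))); [lra|].
  unfold Rdiv. rewrite Rmult_assoc, Rinv_l by lra. lra.
Qed.

Lemma one_step (j e : nat) (lam : R) : 0 < lam -> lam <= INR (S (j + e)) ->
  INR j * (INR (S (j + e)) + 1) <= lam * INR (S (j + e)) -> lam <= INR j + 1 ->
  T (S (S (j + e))) (lam / INR (S (S (j + e)))) (S j) <= T (S (j + e)) (lam / INR (S (j + e))) (S j).
Proof.
  intros Hl HlM Hw1 Hw2.
  set (m := S (j + e)) in *.
  rewrite (T_pascal m _ (S m - S j) (S j)) by lia.
  replace (S j - 1)%nat with j by lia.
  rewrite S_INR. fold m.
  set (M := INR m) in *.
  assert (HM : 1 <= M) by (unfold M, m; apply (le_INR 1); lia).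
  assert (HMe : M = INR j + INR e + 1) by (unfold M, m; rewrite S_INR, plus_INR; ring).
  set (p := lam / M). set (q := lam / (M + 1)).
  assert (Hq0 : 0 < q) by (unfold q; apply Rdiv_lt_0_compat; lra).
  assert (Hqp : q <= p) by (unfold p, q; apply Rmult_le_compat_l; [lra|]; apply Rinv_le_contravar; lra).
  assert (Hp1 : p <= 1) by (unfold p; apply (Rmult_le_reg_r M); [lra|]; unfold Rdiv; rewrite Rmult_assoc, Rinv_l by lra; lra).
  set (b := binom_pmf m q j).
  pose proof (deriv_lb (fun s => T m s (S j)) (fun s => M * g (j + e) j s) q p (M * b) Hqp) as HD.
  assert (Hmain : M * b * (p - q) <= T m p (S j) - T m q (S j)).
  { apply HD.
    - intros x _. unfold m, M. apply (T_deriv (j + e) e j x); lia.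
    - intros x Hx. apply Rmult_le_compat_l; [lra|].
      unfold g. replace (j + e - j)%nat with e by lia.
      destruct (unimodal j e q x p Hq0 (proj1 Hx) (proj2 Hx) Hp1) as [Hu|Hu].
      + eapply Rle_trans.
        * unfold b, m. apply psi_q. split; lra.
          fold m. fold M. unfold q. rewrite S_INR. 
          apply (Rmult_le_reg_r (M + 1)); [lra|].
          replace (M * (1 - lam / (M + 1)) * (M + 1)) with (M * (M + 1 - lam)) by (field; lra).
          fold M in Hw1. replace (INR e + 1) with (M - INR j) by (rewrite HMe; ring). nra.
        * rewrite !Rmult_assoc. apply Rmult_le_compat_l; [left; apply C_pos; lia|]. exact Hu.
      + eapply Rle_trans.
        * unfold b, m, binom_pmf. replace (S (j + e) - j)%nat with (S e) by lia.
          fold m. fold M. unfold q.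
          apply (pmf_cmp j e lam Hl). fold m. fold M. rewrite S_INR. split.
          -- pose proof (S_INR (j + e)). rewrite plus_INR in H. unfold M, m. rewrite S_INR, plus_INR. lra.
          -- unfold M, m in *. rewrite S_INR, plus_INR. assert (INR j <= lam).
             { assert (0 <= INR j) by apply pos_INR. nra. }
             lra.
        * fold m M. fold p. rewrite !Rmult_assoc. apply Rmult_le_compat_l; [left; apply C_pos; lia|]. exact Hu. }
  replace (M * b * (p - q)) with (q * b) in Hmain by (unfold p, q; field; lra).
  lra.
Qed.

Lemma exp_ge x : 1 + x <= exp x.
Proof.
  destruct (Req_dec x 0) as [->|H].
  - rewrite exp_0. lra.
  - left. apply exp_ineq1. auto.
Qed.

Lemma exp_pow x k : exp x ^ k = exp (x * INR k).
Proof.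
  induction k.
  - simpl. rewrite Rmult_0_r, exp_0. reflexivity.
  - rewrite S_INR. simpl. rewrite IHk. rewrite <- exp_plus. f_equal. ring.
Qed.

Lemma Cfact_le m i : (i <= m)%nat -> Binomial.C m i * INR (Factorial.fact i) <= INR m ^ i.
Proof.
  induction i; intros H.
  - unfold Binomial.C. rewrite Nat.sub_0_r. simpl. 
    replace (INR (Factorial.fact m) / (1 * INR (Factorial.fact m)) * 1) with 1 by (field; apply INR_fact_neq_0). lra.
  - rewrite pascal_step3 by lia. rewrite fact_simpl, mult_INR.
    specialize (IHi ltac:(lia)).
    assert (0 < INR (S i)) by (apply lt_0_INR; lia).
    replace (INR (m - i) / INR (S i) * Binomial.C m i * (INR (S i) * INR (Factorial.fact i)))
      with (INR (m - i) * (Binomial.C m i * INR (Factorial.fact i))) by (field; lra).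
    simpl pow. rewrite minus_INR by lia.
    assert (0 <= INR i) by apply pos_INR.
    assert (0 <= Binomial.C m i * INR (Factorial.fact i)).
    { apply Rmult_le_pos; [left; apply C_pos; lia| apply pos_INR]. }
    assert (0 <= INR m - INR i) by (assert (INR i <= INR m) by (apply le_INR; lia); lra).
    assert (0 <= INR m ^ i) by (apply pow_le, pos_INR).
    assert ((INR m - INR i) * (Binomial.C m i * INR (Factorial.fact i)) <= (INR m - INR i) * INR m ^ i)
      by (apply Rmult_le_compat_l; auto).
    nra.
Qed.

Lemma pmf_ub m i j lam : (i <= j)%nat -> (j < m)%nat -> 0 < lam <= INR m ->
  2 * INR j * lam <= INR m ->
  binom_pmf m (lam / INR m) i <=
  (lam ^ i / INR (Factorial.fact i) * exp (- lam)) * (1 + 2 * INR j * lam / INR m).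
Proof.
  intros Hij Hjm Hl HM.
  assert (Hm : 0 < INR m) by (apply lt_0_INR; lia).
  set (M := INR m) in *. set (y := lam / M).
  assert (Hy : 0 <= y <= 1) by (unfold y; split; [apply Rmult_le_pos; [lra| left; apply Rinv_0_lt_compat; lra]|
      apply (Rmult_le_reg_r M); [lra|]; unfold Rdiv; rewrite Rmult_assoc, Rinv_l by lra; lra]).
  unfold binom_pmf. fold M. fold y.
  assert (Hf : 0 < INR (Factorial.fact i)) by (apply lt_0_INR, Factorial.lt_O_fact).
  assert (H1 : Binomial.C m i * y ^ i <= lam ^ i / INR (Factorial.fact i)).
  { pose proof (Cfact_le m i ltac:(lia)) as HC. fold M in HC.
    unfold y. rewrite pow_div by lra.
    assert (0 < M ^ i) by (apply pow_lt; lra).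
    apply (Rmult_le_reg_r (INR (Factorial.fact i) * M ^ i)); [apply Rmult_lt_0_compat; lra|].
    replace (Binomial.C m i * (lam ^ i / M ^ i) * (INR (Factorial.fact i) * M ^ i))
      with ((Binomial.C m i * INR (Factorial.fact i)) * lam ^ i) by (field; lra).
    replace (lam ^ i / INR (Factorial.fact i) * (INR (Factorial.fact i) * M ^ i)) with (M ^ i * lam ^ i) by (field; lra).
    apply Rmult_le_compat_r; auto. apply pow_le; lra. }
  assert (H2 : (1 - y) ^ (m - i) <= exp (- lam) * (1 + 2 * INR j * lam / M)).
  { assert ((1 - y) ^ (m - i) <= exp (- y) ^ (m - i)).
    { apply pow_incr. split; [lra|]. pose proof (exp_ge (- y)). lra. }
    rewrite exp_pow in H. rewrite minus_INR in H by lia.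
    replace (- y * (INR m - INR i)) with (- lam + y * INR i) in H by (unfold y, M; field; exact (Rgt_not_eq _ _ Hm)).
    rewrite exp_plus in H.
    set (z := y * INR i) in *.
    assert (Hz : 0 <= z <= 1/2).
    { unfold z, y. split. apply Rmult_le_pos; [apply Rmult_le_pos; [lra|left; apply Rinv_0_lt_compat; lra]|apply pos_INR].
      assert (INR i <= INR j) by (apply le_INR; lia).
      apply (Rmult_le_reg_r M); [lra|].
      replace (lam / M * INR i * M) with (lam * INR i) by (field; lra). nra. }
    assert (exp z <= 1 + 2 * z).
    { pose proof (exp_ge (- z)). rewrite exp_Ropp in H0.
      assert (0 < exp z) by apply exp_pos.
      assert (1 - z <= / exp z) by lra.
      assert ((1 - z) * exp z <= 1).
      { replace 1 with (/ exp z * exp z) at 2 by (field; lra). apply Rmult_le_compat_r; lra. }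
      nra. }
    assert (z <= INR j * lam / M).
    { unfold z, y. assert (INR i <= INR j) by (apply le_INR; lia).
      replace (lam / M * INR i) with (INR i * lam / M) by (field; lra).
      unfold Rdiv. apply Rmult_le_compat_r; [left; apply Rinv_0_lt_compat; lra|]. nra. }
    assert (0 < exp (- lam)) by apply exp_pos.
    eapply Rle_trans; [exact H|]. apply Rmult_le_compat_l; lra. }
  assert (0 <= Binomial.C m i * y ^ i) by (apply Rmult_le_pos; [left; apply C_pos; lia| apply pow_le; lra]).
  assert (0 <= (1 - y) ^ (m - i)) by (apply pow_le; lra).
  assert (0 <= lam ^ i / INR (Factorial.fact i)) by (apply Rmult_le_pos; [apply pow_le; lra| left; apply Rinv_0_lt_compat; lra]).
  eapply Rle_trans. apply Rmult_le_compat; eauto.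
  right. ring.
Qed.

Lemma chain n j lam : (j < n)%nat -> 0 < lam <= INR n ->
  INR j * (INR n + 1) <= lam * INR n -> lam <= INR j + 1 ->
  forall k, T (n + k) (lam / INR (n + k)) (S j) <= T n (lam / INR n) (S j).
Proof.
  intros Hjn Hl Hw1 Hw2 k. induction k.
  - rewrite Nat.add_0_r. lra.
  - eapply Rle_trans; [|exact IHk].
    set (e := (n + k - S j)%nat).
    replace (n + S k)%nat with (S (S (j + e))) by (unfold e; lia).
    replace (n + k)%nat with (S (j + e)) by (unfold e; lia).
    assert (Hnk : INR n <= INR (S (j + e))) by (apply le_INR; unfold e; lia).
    assert (0 <= INR j) by apply pos_INR.
    apply one_step; try lra.
    set (M := INR (S (j + e))) in *.
    assert (INR j * (M + 1) * INR n <= INR j * (INR n + 1) * M) by nra.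
    assert (INR j * (INR n + 1) * M <= lam * INR n * M) by (apply Rmult_le_compat_r; lra).
    assert (1 <= INR n) by (apply (le_INR 1); lia).
    nra.
Qed.

Lemma T_complement m s j : (j < m)%nat -> T m s (S j) = 1 - rsum (binom_pmf m s) 0 (S j).
Proof.
  intros H.
  assert (Htot : rsum (binom_pmf m s) 0 (S m) = 1).
  { rewrite <- sum_f_R0_rsum. unfold binom_pmf.
    rewrite <- binomial. replace (s + (1 - s)) with 1 by ring. apply pow1. }
  replace (S m) with (S j + (m - j))%nat in Htot by lia.
  rewrite rsum_split in Htot. unfold T.
  replace (S m - S j)%nat with (m - j)%nat by lia. replace (0 + S j)%nat with (S j) in Htot by lia. lra.
Qed.

Lemma h_rsum d c : h d c = 1 - exp (- c) * rsum (fun i => c ^ i / INR (Factorial.fact i)) 0 d.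
Proof. unfold h. rewrite fold_rsum. reflexivity. Qed.

Lemma window n j lam : (j < n)%nat -> 0 < lam <= INR n ->
  INR j * (INR n + 1) <= lam * INR n -> lam <= INR j + 1 ->
  h (S j) lam <= T n (lam / INR n) (S j).
Proof.
  intros Hjn Hl Hw1 Hw2.
  set (Sm := rsum (fun i => lam ^ i / INR (Factorial.fact i)) 0 (S j)).
  assert (HS : 0 <= Sm).
  { apply rsum_nonneg. intros i. apply Rmult_le_pos; [apply pow_le; lra| left; apply Rinv_0_lt_compat, lt_0_INR, Factorial.lt_O_fact]. }
  set (A := 2 * INR j * lam * exp (- lam) * Sm).
  assert (HA : 0 <= A).
  { unfold A. pose proof (pos_INR j). pose proof (exp_pos (- lam)).
    apply Rmult_le_pos; auto. apply Rmult_le_pos; [|lra]. nra. }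
  assert (Hb : forall m, (n <= m)%nat -> 2 * INR j * lam <= INR m ->
            h (S j) lam - A / INR m <= T n (lam / INR n) (S j)).
  { intros m Hnm HM.
    assert (Hm0 : 0 < INR m) by (apply lt_0_INR; lia).
    replace m with (n + (m - n))%nat at 2 by lia.
    eapply Rle_trans; [|apply (chain n j lam); auto].
    replace (n + (m - n))%nat with m by lia.
    assert (Hnm' : INR n <= INR m) by (apply le_INR; lia).
    rewrite T_complement by lia.
    rewrite h_rsum. fold Sm.
    assert (rsum (binom_pmf m (lam / INR m)) 0 (S j) <=
            rsum (fun i => (exp (- lam) * (1 + 2 * INR j * lam / INR m)) * (lam ^ i / INR (Factorial.fact i))) 0 (S j)).
    { apply rsum_le. intros i Hi. eapply Rle_trans.
      - apply (pmf_ub m i j lam); try lia; lra.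
      - right. ring. }
    rewrite rsum_scal in H. fold Sm in H.
    replace (A / INR m) with (exp (- lam) * (2 * INR j * lam / INR m) * Sm) by (unfold A; field; lra).
    nra. }
  destruct (Rle_lt_dec (h (S j) lam) (T n (lam / INR n) (S j))) as [H|H]; auto.
  exfalso.
  set (dl := h (S j) lam - T n (lam / INR n) (S j)).
  assert (Hdl : 0 < dl) by (unfold dl; lra).
  destruct (INR_unbounded (INR n + 2 * INR j * lam + A / dl)) as [m Hm].
  assert (0 <= A / dl) by (apply Rmult_le_pos; [lra| left; apply Rinv_0_lt_compat; lra]).
  assert (0 <= 2 * INR j * lam) by (pose proof (pos_INR j); nra).
  assert (Hnm : (n <= m)%nat) by (apply INR_le; lra).
  specialize (Hb m Hnm ltac:(lra)).
  assert (Hm0 : 0 < INR m) by (pose proof (pos_INR n); lra).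
  assert (A / INR m < dl).
  { apply (Rmult_lt_reg_r (INR m)); auto. unfold Rdiv. rewrite Rmult_assoc, Rinv_l by lra.
    assert (A / dl < INR m) by lra.
    apply (Rmult_lt_reg_r (/ dl)); [apply Rinv_0_lt_compat; lra|].
    replace (dl * INR m * / dl) with (INR m) by (field; lra). rewrite Rmult_1_r. exact H2. }
  unfold dl in *. lra.
Qed.

Definition pis (x : R) (i : nat) := x ^ i / INR (Factorial.fact i).

Lemma E_deriv j x :
  is_derive (fun x => exp (- x) * rsum (pis x) 0 (S j)) x (- (exp (- x) * pis x j)).
Proof.
  induction j.
  - apply is_derive_ext with (fun x => exp (- x)).
    + intros t. unfold pis. simpl. field.
    + auto_derive; auto. unfold pis; simpl. field.
  - apply is_derive_ext with (fun x => exp (- x) * rsum (pis x) 0 (S j) + exp (- x) * (x ^ (S j) / INR (Factorial.fact (S j)))).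
    + intros t. replace (S (S j)) with (S j + 1)%nat by lia. rewrite rsum_split.
      replace (0 + S j)%nat with (S j) by lia. change (rsum (pis t) (S j) 1) with (pis t (S j) + 0). unfold pis at 2. rewrite Rplus_0_r. rewrite Rmult_plus_distr_l. reflexivity.
    + replace (- (exp (- x) * pis x (S j))) with
        (- (exp (- x) * pis x j) + (- (exp (- x) * pis x (S j)) + exp (- x) * pis x j)) by ring.
      apply (is_derive_plus (fun x => exp (- x) * rsum (pis x) 0 (S j))); auto.
      auto_derive; auto. unfold pis.
      change (match j with 0%nat => 1 | S _ => INR j + 1 end) with (INR (S j)).
      change (Factorial.fact j + j * Factorial.fact j)%nat with (Factorial.fact (S j)).
      rewrite fact_simpl, mult_INR.
      assert (INR (Factorial.fact j) <> 0) by apply INR_fact_neq_0.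
      assert (INR (S j) <> 0) by (apply not_0_INR; lia).
      cbn [Nat.pred pow]. field. auto.
Qed.

Lemma h_deriv j x : is_derive (fun x => h (S j) x) x (exp (- x) * pis x j).
Proof.
  apply is_derive_ext with (fun x => 1 - exp (- x) * rsum (pis x) 0 (S j)).
  - intros t. rewrite h_rsum. reflexivity.
  - replace (exp (- x) * pis x j) with (0 - (- (exp (- x) * pis x j))) by ring.
    apply (is_derive_minus (fun _ => 1)). auto_derive; auto. apply E_deriv.
Qed.

Lemma Tn_deriv m' j x : (j <= m')%nat ->
  is_derive (fun x => T (S m') (x / INR (S m')) (S j)) x (g m' j (x / INR (S m'))).
Proof.
  intros H.
  assert (Hn : 0 < INR (S m')) by (apply lt_0_INR; lia).
  pose proof (T_deriv m' (m' - j) j (x / INR (S m')) ltac:(lia) H) as HT.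
  assert (Hg : is_derive (fun t => t / INR (S m')) x (/ INR (S m'))).
  { auto_derive; auto. change (match m' with 0%nat => 1 | S _ => INR m' + 1 end) with (INR (S m')). apply Rmult_1_l. }
  pose proof (is_derive_comp (fun s => T (S m') s (S j)) (fun t => t / INR (S m')) x _ _ HT Hg) as Hc.
  replace (g m' j (x / INR (S m'))) with (scal (/ INR (S m')) (INR (S m') * g m' j (x / INR (S m')))).
  - exact Hc.
  - change (scal (/ INR (S m')) (INR (S m') * g m' j (x / INR (S m')))) with
      (/ INR (S m') * (INR (S m') * g m' j (x / INR (S m')))). rewrite <- Rmult_assoc. rewrite Rinv_l by lra. apply Rmult_1_l.
Qed.

Lemma T_one n : forall k a, (n - a = k)%nat -> (1 <= a <= n)%nat -> T n 1 a = 1.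
Proof.
  induction k; intros a Hk Ha.
  - assert (a = n) by lia. subst a. rewrite T_step by lia. rewrite T_out by lia.
    unfold binom_pmf. rewrite Nat.sub_diag, Cnn, pow1. simpl. ring.
  - rewrite T_step by lia. rewrite (IHk (S a)) by lia.
    unfold binom_pmf. replace (n - a)%nat with (S (n - S a)) by lia.
    simpl. ring.
Qed.

Lemma h_le1 d c : 0 <= c -> h d c <= 1.
Proof.
  intros Hc. rewrite h_rsum. pose proof (exp_pos (- c)).
  assert (0 <= rsum (fun i => c ^ i / INR (Factorial.fact i)) 0 d).
  { apply rsum_nonneg. intros i. apply Rmult_le_pos; [apply pow_le; lra| left; apply Rinv_0_lt_compat, lt_0_INR, Factorial.lt_O_fact]. }
  nra.
Qed.

Lemma big_lam (j e : nat) lam : (1 <= e)%nat -> INR j + 1 < lam -> lam <= INR (S (j + e)) ->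
  h (S j) lam <= T (S (j + e)) (lam / INR (S (j + e))) (S j).
Proof.
  intros He Hl1 Hl2.
  set (m' := (j + e)%nat).
  set (N := INR (S m')).
  assert (Hl2' : lam <= N) by (unfold N, m'; exact Hl2).
  assert (HN : N = INR j + INR e + 1) by (unfold N, m'; rewrite S_INR, plus_INR; ring).
  assert (HE1 : 1 <= INR e) by (apply (le_INR 1); lia).
  assert (Hj0 : 0 <= INR j) by apply pos_INR.
  set (G := fun x => T (S m') (x / N) (S j) - h (S j) x).
  set (dG := fun x => g m' j (x / N) - exp (- x) * pis x j).
  assert (HG : forall x, is_derive G x (dG x)).
  { intros x. unfold G, dG. apply (is_derive_minus (fun x => T (S m') (x / N) (S j)) (fun x => h (S j) x)).
    - unfold N. apply Tn_deriv. unfold m'; lia.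
    - apply h_deriv. }
  set (Cc := Binomial.C m' j).
  assert (HC : 0 < Cc) by (apply C_pos; unfold m'; lia).
  set (Z := fun x => Cc * (1 - x / N) ^ e * exp x - N ^ j / INR (Factorial.fact j)).
  assert (HdGZ : forall x, dG x = (x ^ j / N ^ j) * exp (- x) * Z x).
  { intros x. unfold dG, Z, g, pis. replace (m' - j)%nat with e by (unfold m'; lia).
    fold Cc. rewrite pow_div by lra.
    rewrite exp_Ropp.
    assert (0 < exp x) by apply exp_pos.
    assert (0 < N ^ j) by (apply pow_lt; lra).
    assert (INR (Factorial.fact j) <> 0) by apply INR_fact_neq_0.
    field. repeat split; lra. }
  set (dZ := fun x => Cc * (- (INR e / N) * (1 - x / N) ^ (pred e) * exp x + (1 - x / N) ^ e * exp x)).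
  assert (HZ : forall x, is_derive Z x (dZ x)).
  { intros x. unfold Z, dZ. auto_derive; auto. unfold Rminus, Rdiv; ring. }
  assert (HdZ : forall x, INR j + 1 <= x <= N -> dZ x <= 0).
  { intros x Hx. unfold dZ. destruct e as [|e']; [lia|]. cbn [Nat.pred pow].
    rewrite S_INR in HN |- *.
    assert (0 <= (1 - x / N)) by (apply (Rmult_le_reg_r N); [lra|]; field_simplify; lra).
    assert (0 <= (1 - x / N) ^ e') by (apply pow_le; auto).
    assert (0 < exp x) by apply exp_pos.
    assert (Heq : - ((INR e' + 1) / N) * (1 - x / N) ^ e' * exp x + (1 - x / N) * (1 - x / N) ^ e' * exp x
               = ((1 - x / N) ^ e' * exp x) * ((INR j + 1 - x) / N)).
    { replace (INR j + 1 - x) with (N - x - (INR e' + 1)) by lra. field. lra. }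
    rewrite Heq.
    assert ((INR j + 1 - x) / N <= 0).
    { unfold Rdiv. assert (0 < / N) by (apply Rinv_0_lt_compat; lra). nra. }
    assert (0 <= (1 - x / N) ^ e' * exp x) by (apply Rmult_le_pos; lra).
    assert (((1 - x / N) ^ e' * exp x) * ((INR j + 1 - x) / N) <= 0) by nra. nra. }
  assert (HZmono : forall x y, INR j + 1 <= x -> x <= y -> y <= N -> Z y <= Z x).
  { intros x y Hx Hxy Hy. apply (deriv_anti Z dZ x y Hxy).
    - intros t _. apply HZ.
    - intros t Ht. apply HdZ. lra. }
  assert (Hpos : forall x, 0 < x -> 0 < (x ^ j / N ^ j) * exp (- x)).
  { intros x Hx. apply Rmult_lt_0_compat; [|apply exp_pos].
    apply Rdiv_lt_0_compat; apply pow_lt; lra. }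
  assert (HGd : 0 <= G (INR j + 1)).
  { unfold G. fold N. pose proof (window (S m') j (INR j + 1)) as W.
    rewrite <- S_INR. rewrite <- S_INR in W. fold N in W.
    assert (INR (S j) <= N) by (rewrite S_INR; lra).
    assert (0 < INR (S j)) by (apply lt_0_INR; lia).
    assert (INR j * (N + 1) <= INR (S j) * N) by (rewrite S_INR; nra).
    specialize (W ltac:(unfold m'; lia) ltac:(lra) H1 ltac:(rewrite S_INR; lra)). lra. }
  assert (HGN : 0 <= G N).
  { unfold G. replace (N / N) with 1 by (field; lra).
    rewrite (T_one (S m') (S m' - S j) (S j)) by (unfold m'; lia).
    pose proof (h_le1 (S j) N ltac:(lra)). lra. }
  assert (G lam = T (S m') (lam / N) (S j) - h (S j) lam) by reflexivity.
  destruct (Rle_lt_dec 0 (Z lam)) as [HZl|HZl].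
  - assert (G (INR j + 1) <= G lam).
    { apply (deriv_mono G dG (INR j + 1) lam); [lra| intros; apply HG|].
      intros x Hx. rewrite HdGZ. apply Rmult_le_pos; [left; apply Hpos; lra|].
      pose proof (HZmono x lam ltac:(lra) ltac:(lra) ltac:(lra)). lra. }
    lra.
  - assert (G N <= G lam).
    { apply (deriv_anti G dG lam N); [lra| intros; apply HG|].
      intros x Hx. rewrite HdGZ.
      pose proof (HZmono lam x ltac:(lra) ltac:(lra) ltac:(lra)).
      pose proof (Hpos x ltac:(lra)). nra. }
    lra.
Qed.

Theorem corollary1 (k d : nat) (c : R) :
  (1 <= k)%nat -> (1 <= d)%nat ->
  0 < c -> c <= INR k ->
  INR d <= c * (1 - 1 / (INR k + 1)) + 1 ->
  binom_tail k (c / INR k) d >= h d c.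
Proof.
  intros Hk Hd Hc HcK Hdc.
  rewrite tail_T.
  destruct d as [|j]; [lia|].
  rewrite S_INR in Hdc.
  assert (HK : 1 <= INR k) by (apply (le_INR 1); lia).
  assert (Hw : INR j * (INR k + 1) <= c * INR k).
  { assert (INR j <= c * (1 - 1 / (INR k + 1))) by lra.
    replace (c * (1 - 1 / (INR k + 1))) with (c * INR k / (INR k + 1)) in H by (field; lra).
    apply (Rmult_le_compat_r (INR k + 1)) in H; [|lra].
    replace (c * INR k / (INR k + 1) * (INR k + 1)) with (c * INR k) in H by (field; lra). lra. }
  assert (Hjk : (j < k)%nat).
  { apply INR_lt. assert (INR j * (INR k + 1) < INR k * (INR k + 1)) by nra. nra. }
  destruct (Rle_lt_dec c (INR j + 1)) as [Hs|Hs].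
  - apply Rle_ge. apply window; auto.
  - apply Rle_ge.
    assert (Hjk' : (S j < k)%nat).
    { apply INR_lt. rewrite S_INR. lra. }
    destruct k as [|m']; [lia|].
    replace m' with (j + (m' - j))%nat in * by lia.
    apply big_lam; auto. lia.
Qed.
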